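(* Let $G$ be a group with a finite symmetric subset $S$ such that $\overline S$ generates $G$, and let $\|\cdot\|$ be the word norm associated with $\overline S$. Then $(G,\|\cdot\|)$ is metrically fully residually $\mathcal C$, where $\mathcal C$ is the class of finite groups with invariant integer-valued norms, if and only if for every $m\in\mathbb N$ the ball $B_m(1)=\{g\in G:\|g\|\le m\}$ is closed in the profinite topology of $G$.
   Context: $\Lambda=[0,\infty)$. A pseudo-norm on $G$ is $\ell:G\to\Lambda$ with $\ell(1)=0$, $\ell(g)=\ell(g^{-1})$, $\ell(gh)\le\ell(g)+\ell(h)$; a norm if $\ell(g)=0\Rightarrow g=1$; invariant if $\ell(h^{-1}gh)=\ell(g)$. $\overline S$ is the smallest conjugation-invariant subset of $G$ containing $S$; $\|g\|=\min\{k:g=s_1\cdots s_k,s_i\in\overline S\}$. For pseudo-normed $(G_1,\ell_1),(G_2,\ell_2)$, finite $D\subseteq G_1$ and finite $Q\subseteq\Lambda\cap\mathbb Q$ with $0\in Q$, $\varphi:G_1\to G_2$ is a $D$-$Q$-almost-homomorphism if injective on $D$, $\varphi(hg)=\varphi(h)\varphi(g)$ whenever $h,g,hg\in D$, and $\ell_1(g)\,\square\,q\iff\ell_2(\varphi(g))\,\square\,q$ for all $g\in D,q\in Q,\square\in\{<,>,=\}$. $(G,\ell)$ is metrically fully residually $\mathcal C$ if for all such $D,Q$ there are $(C,\ell_C)\in\mathcal C$ and a group homomorphism $\varphi:G\to C$ with $\ell_C(\varphi(g))\le\ell(g)$ for all $g$, which is a $D$-$Q$-almost-homomorphism. *)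

(* Defs.v *)
From mathcomp Require Import all_boot all_order all_algebra all_fingroup.
From Stdlib Require Import ClassicalEpsilon.
From Stdlib Require List.
Import List.ListNotations.
Set Implicit Arguments. Unset Strict Implicit. Unset Printing Implicit Defensive.
Import Order.TTheory GRing.Theory Num.Theory.

Record Grp := {
  gcar :> Type;
  gmul : gcar -> gcar -> gcar;
  ginv : gcar -> gcar;
  gone : gcar;
  gmulA : forall x y z, gmul x (gmul y z) = gmul (gmul x y) z;
  gmul1 : forall x, gmul gone x = x;
  gmulV : forall x, gmul (ginv x) x = gone }.

Arguments gmul {g}. Arguments ginv {g}. Arguments gone {g}.

Section Defs.
Variable G : Grp.

Definition gprod (l : list G) : G := List.fold_right gmul gone l.

Definition gconj (x h : G) : G := gmul (ginv h) (gmul x h).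

(* \overline S : smallest conjugation-invariant subset containing S,
   i.e. the set of all conjugates of elements of S. *)
Definition Sbar (S : list G) (x : G) : Prop := exists s h, List.In s S /\ x = gconj s h.

Definition generates (T : G -> Prop) : Prop :=
  forall g : G, exists l : list G,
    List.Forall (fun x => T x \/ T (ginv x)) l /\ gprod l = g.

Definition word_len (S : list G) (g : G) (k : nat) : Prop :=
  exists l : list G, List.length l = k /\ List.Forall (Sbar S) l /\ gprod l = g.

Definition wnorm (S : list G) (g : G) : nat :=
  epsilon (inhabits 0%N)
    (fun n => word_len S g n /\ forall k, word_len S g k -> (n <= k)%N).

Definition subgroup (N : G -> Prop) : Prop :=
  N gone /\ (forall x y, N x -> N y -> N (gmul x y)) /\ (forall x, N x -> N (ginv x)).
Definition normal (N : G -> Prop) : Prop := forall x h, N x -> N (gconj x h).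
Definition finite_index (N : G -> Prop) : Prop :=
  exists reps : list G, forall x, exists r, List.In r reps /\ N (gmul (ginv r) x).
Definition profinite_open (U : G -> Prop) : Prop :=
  forall x, U x -> exists N : G -> Prop,
    subgroup N /\ normal N /\ finite_index N /\ forall n, N n -> U (gmul x n).
Definition profinite_closed (X : G -> Prop) : Prop :=
  profinite_open (fun x => ~ X x).

Definition inv_int_norm (gT : finGroupType) (lC : gT -> nat) : Prop :=
  lC 1%g = 0%N /\ (forall x, lC (x^-1)%g = lC x) /\
  (forall x y, (lC (x * y)%g <= lC x + lC y)%N) /\ (forall x, lC x = 0%N -> x = 1%g) /\
  (forall x y, lC (x ^ y)%g = lC x).

Definition is_hom (gT : finGroupType) (phi : G -> gT) : Prop :=
  forall x y, phi (gmul x y) = (phi x * phi y)%g.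

Definition almost_hom (gT : finGroupType) (l1 : G -> nat) (l2 : gT -> nat)
    (D : list G) (Q : seq rat) (phi : G -> gT) : Prop :=
  (forall x y, List.In x D -> List.In y D -> phi x = phi y -> x = y) /\
  (forall h g, List.In h D -> List.In g D -> List.In (gmul h g) D -> phi (gmul h g) = (phi h * phi g)%g) /\
  (forall g q, List.In g D -> q \in Q ->
     ((((l1 g)%:R : rat) < q)%R <-> (((l2 (phi g))%:R : rat) < q)%R) /\
     ((((l1 g)%:R : rat) > q)%R <-> (((l2 (phi g))%:R : rat) > q)%R) /\
     ((((l1 g)%:R : rat) = q)%R <-> (((l2 (phi g))%:R : rat) = q)%R)).

Definition mfr_finite_inv (l : G -> nat) : Prop :=
  forall (D : list G) (Q : seq rat),
    all (fun q : rat => (0 <= q)%R) Q -> (0%R \in Q) ->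
    exists (gT : finGroupType) (lC : gT -> nat) (phi : G -> gT),
      inv_int_norm lC /\ is_hom phi /\ (forall g, (lC (phi g) <= l g)%N) /\
      almost_hom l lC D Q phi.
End Defs.

(* Main.v *)
Require Import Defs.
From HB Require Import structures.
From mathcomp Require Import all_boot all_order all_algebra all_fingroup.
From Stdlib Require List.
From Stdlib Require Import ClassicalEpsilon Classical.
Set Implicit Arguments. Unset Strict Implicit. Unset Printing Implicit Defensive.

Local Infix "⊗" := gmul (at level 40, left associativity).

Section GrpLemmas.
Variable G : Grp.
Implicit Types x y z a b : G.

Lemma gmulV' x : x ⊗ ginv x = gone.
Proof.
rewrite -[x ⊗ _]gmul1 -{1}(gmulV (ginv x)) -gmulA (gmulA (ginv x)) gmulV gmul1.
by rewrite gmulV.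
Qed.

Lemma gmul1' x : x ⊗ gone = x.
Proof. by rewrite -(gmulV x) gmulA gmulV' gmul1. Qed.

Lemma gmulK x y : ginv x ⊗ (x ⊗ y) = y.
Proof. by rewrite gmulA gmulV gmul1. Qed.

Lemma gmulVK x y : x ⊗ (ginv x ⊗ y) = y.
Proof. by rewrite gmulA gmulV' gmul1. Qed.

Lemma ginv_uniq a b : a ⊗ b = gone -> ginv a = b.
Proof. by move=> E; rewrite -(gmul1' (ginv a)) -E gmulK. Qed.

Lemma ginvK x : ginv (ginv x) = x.
Proof. by apply: ginv_uniq; rewrite gmulV. Qed.

Lemma ginv1 : ginv (@gone G) = gone.
Proof. by apply: ginv_uniq; rewrite gmul1. Qed.

Lemma ginvM x y : ginv (x ⊗ y) = ginv y ⊗ ginv x.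
Proof. by apply: ginv_uniq; rewrite -gmulA gmulVK gmulV'. Qed.

End GrpLemmas.

Ltac gsimpl := repeat progress rewrite ?ginvM ?ginvK ?ginv1 -?gmulA ?gmul1 ?gmul1'
   ?gmulK ?gmulVK ?gmulV ?gmulV' /=.

Definition pb (P : Prop) : bool := if excluded_middle_informative P then true else false.
Lemma pbE (P : Prop) : pb P = true <-> P.
Proof. by rewrite /pb; case: excluded_middle_informative. Qed.

Lemma ex_min (P : nat -> Prop) : (exists n, P n) -> exists n, P n /\ forall k, P k -> (n <= k)%N.
Proof.
move=> ex.
have ex' : exists n, pb (P n) by case: ex => n Hn; exists n; apply/pbE.
case: (ex_minnP ex') => n /pbE Pn Hmin; exists n; split => // k Pk.
by apply: Hmin; apply/pbE.
Qed.

Lemma In_has (T : Type) (p : pred T) (s : seq T) x : List.In x s -> p x -> has p s.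
Proof. elim: s => //= a s IH [<-|H] px; first by rewrite px. by rewrite IH ?orbT. Qed.

Lemma nth_In (T : Type) (x0 : T) (s : seq T) i : (i < size s)%N -> List.In (nth x0 s i) s.
Proof. elim: s i => //= a s IH [|i] //= H; first by left. by right; apply: IH. Qed.

Lemma mem_In (T : eqType) (s : seq T) x : x \in s -> List.In x s.
Proof. elim: s => //= a s IH; rewrite inE => /orP[/eqP ->|H]; [by left|by right; apply: IH]. Qed.

Section Quot.
Variable G : Grp.
Variable N : G -> Prop.
Hypothesis HN : subgroup N.
Hypothesis HNn : Defs.normal N.
Variable reps : list G.
Hypothesis Hreps : forall x, exists r, List.In r reps /\ N (ginv r ⊗ x).

Definition eqv x y := N (ginv x ⊗ y).

Lemma eqv_refl x : eqv x x.
Proof. by rewrite /eqv gmulV; case: HN. Qed.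
Lemma eqv_sym x y : eqv x y -> eqv y x.
Proof. move=> H; case: HN => _ [_ Hi]; have := Hi _ H; by gsimpl. Qed.
Lemma eqv_trans x y z : eqv x y -> eqv y z -> eqv x z.
Proof.
move=> H1 H2; case: HN => _ [Hm _]; have := Hm _ _ H1 H2; rewrite /eqv; by gsimpl.
Qed.
Lemma eqv_mul x x' y y' : eqv x x' -> eqv y y' -> eqv (x ⊗ y) (x' ⊗ y').
Proof.
move=> H1 H2; case: HN => _ [Hm _].
have H3 := HNn y H1. have := Hm _ _ H3 H2. rewrite /eqv /gconj; by gsimpl.
Qed.
Lemma eqv_inv x x' : eqv x x' -> eqv (ginv x) (ginv x').
Proof.
move=> H; have H2 := HNn (ginv x') (eqv_sym H). move: H2; rewrite /eqv /gconj; by gsimpl.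
Qed.

Definition cidx (x : G) : nat := find (fun r => pb (eqv r x)) reps.
Definition rep (i : nat) : G := nth gone reps i.

Lemma cidx_has x : has (fun r => pb (eqv r x)) reps.
Proof. case: (Hreps x) => r [Hr Nr]; apply: (In_has Hr); exact/pbE. Qed.

Lemma cidx_lt x : (cidx x < size reps)%N.
Proof. by rewrite -has_find cidx_has. Qed.

Lemma rep_cidx x : eqv (rep (cidx x)) x.
Proof. by apply/pbE; apply: (nth_find gone (cidx_has x)). Qed.

Lemma cidx_eq x y : eqv x y -> cidx x = cidx y.
Proof.
move=> H; apply: eq_find => r.
have E: eqv r x <-> eqv r y.
  by split => H1; [apply: eqv_trans H1 H | apply: eqv_trans H1 (eqv_sym H)].
case Ex: (pb (eqv r x)); case Ey: (pb (eqv r y)) => //.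
- by move/pbE: Ex => /E /pbE; rewrite Ey.
- by move/pbE: Ey => /E /pbE; rewrite Ex.
Qed.

Lemma cidx_eqv x y : cidx x = cidx y -> eqv x y.
Proof.
move=> E; apply: eqv_trans (eqv_sym (rep_cidx x)) _; rewrite E; exact: rep_cidx.
Qed.

Lemma cidx_canon x : cidx (rep (cidx x)) == cidx x.
Proof. by apply/eqP/cidx_eq/rep_cidx. Qed.

Definition qT := {i : 'I_(size reps) | cidx (rep i) == i}.
HB.instance Definition _ := Finite.on qT.

Definition qof (x : G) : qT := exist _ (Ordinal (cidx_lt x)) (cidx_canon x).
Definition qrep (u : qT) : G := rep (val (val u)).

Lemma qof_rep u : qof (qrep u) = u.
Proof.
case: u => [[i Hi] /= Hc]; apply: val_inj; apply: val_inj => /=.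
by rewrite /qrep /=; apply/eqP.
Qed.

Lemma qofP x y : qof x = qof y <-> eqv x y.
Proof.
split => [E|H]; last by apply: val_inj; apply: val_inj => /=; apply: cidx_eq.
apply: cidx_eqv; have := congr1 (fun u => val (val u)) E; done.
Qed.

Lemma eqv_qrep x : eqv x (qrep (qof x)).
Proof. exact: eqv_sym (rep_cidx x). Qed.

Definition qmul u v := qof (qrep u ⊗ qrep v).
Definition qinv u := qof (ginv (qrep u)).
Definition qone := qof gone.

Lemma qmulE x y : qmul (qof x) (qof y) = qof (x ⊗ y).
Proof. apply/qofP; apply: eqv_mul; apply: eqv_sym; exact: eqv_qrep. Qed.
Lemma qinvE x : qinv (qof x) = qof (ginv x).
Proof. apply/qofP; apply: eqv_inv; apply: eqv_sym; exact: eqv_qrep. Qed.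

Lemma qmulA : associative qmul.
Proof.
move=> u v w; rewrite -(qof_rep u) -(qof_rep v) -(qof_rep w).
by rewrite !qmulE gmulA.
Qed.
Lemma qmul1 : left_id qone qmul.
Proof. by move=> u; rewrite -(qof_rep u) /qone qmulE gmul1. Qed.
Lemma qmulV : left_inverse qone qinv qmul.
Proof. by move=> u; rewrite -(qof_rep u) qinvE qmulE gmulV. Qed.

HB.instance Definition _ := Finite_isGroup.Build qT qmulA qmul1 qmulV.

Lemma qof_hom : is_hom (qof : G -> qT).
Proof. move=> x y; by rewrite -qmulE. Qed.

End Quot.

Lemma quotient_exists (G : Grp) (N : G -> Prop) :
  subgroup N -> Defs.normal N -> finite_index N ->
  exists (gT : finGroupType) (phi : G -> gT), is_hom phi /\
    (forall u, exists g, phi g = u) /\ (forall x y, phi x = phi y <-> N (ginv x ⊗ y)).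
Proof.
move=> HN HNn [reps Hreps].
eexists; exists (qof HN Hreps); split; first exact: qof_hom.
split; first by move=> u; exists (qrep u); apply: qof_rep.
by move=> x y; apply: qofP.
Unshelve. all: exact HNn.
Qed.

Section W.
Variable G : Grp.
Variable S : list G.
Hypothesis Hsym : forall s, List.In s S -> List.In (ginv s) S.
Hypothesis Hgen : generates (Sbar S).

Lemma gprod_nil : @gprod G nil = @gone G. Proof. by []. Qed.
Lemma gprod_cons (a : G) (l : list G) : gprod (a :: l) = a ⊗ gprod l. Proof. by []. Qed.

Lemma gprod_app (l1 l2 : list G) : gprod (List.app l1 l2) = gprod l1 ⊗ gprod l2.
Proof. elim: l1 => [|a l IH]; first by rewrite gprod_nil gmul1. by rewrite (gprod_cons a l) -gmulA -IH. Qed.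

Lemma gprod_inv (l : list G) : gprod (List.rev (List.map ginv l)) = ginv (gprod l).
Proof.
elim: l => [|a l IH]; first by rewrite /= ginv1.
rewrite [List.map _ _]/= [List.rev _]/=.
by rewrite gprod_app IH gprod_cons gprod_nil gmul1' gprod_cons ginvM.
Qed.

Lemma gprod_conj (l : list G) h : gprod (List.map (fun x => gconj x h) l) = gconj (gprod l) h.
Proof.
elim: l => [|a l IH]; first by rewrite /= /gconj gmul1 gmulV.
rewrite [List.map _ _]/= !gprod_cons IH /gconj; by gsimpl.
Qed.

Lemma Sbar_inv x : Sbar S x -> Sbar S (ginv x).
Proof.
case=> s [h [Hs ->]]; exists (ginv s), h; split; first exact: Hsym.
by rewrite /gconj; gsimpl.
Qed.

Lemma Sbar_conj x k : Sbar S x -> Sbar S (gconj x k).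
Proof.
case=> s [h [Hs ->]]; exists s, (h ⊗ k); split => //.
by rewrite /gconj; gsimpl.
Qed.

Lemma wl_ex g : exists n, word_len S g n.
Proof.
case: (Hgen g) => l [Hl Hp]; exists (List.length l), l; split => //; split => //.
refine (List.Forall_impl _ _ Hl) => x [//|/Sbar_inv]; by rewrite ginvK.
Qed.

Lemma wnorm_spec g : word_len S g (wnorm S g) /\ forall k, word_len S g k -> (wnorm S g <= k)%N.
Proof.
have := epsilon_spec (inhabits 0%N) (fun n => word_len S g n /\ forall k, word_len S g k -> (n <= k)%N).
by apply; apply: ex_min; exact: wl_ex.
Qed.

Lemma wnorm_le g k : word_len S g k -> (wnorm S g <= k)%N.
Proof. by case: (wnorm_spec g) => _; apply. Qed.

Lemma wnorm1 : wnorm S gone = 0.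
Proof. apply/eqP; rewrite -leqn0; apply: wnorm_le; by exists nil. Qed.

Lemma wnorm0 g : wnorm S g = 0 -> g = gone.
Proof. case: (wnorm_spec g) => [[l [Hl [_ Hp]]] _] E; rewrite E in Hl.
by case: l Hl Hp => // _ <-. Qed.

Lemma wnorm_mul g h : (wnorm S (g ⊗ h) <= wnorm S g + wnorm S h)%N.
Proof.
case: (wnorm_spec g) => [[l1 [L1 [F1 P1]]] _]; case: (wnorm_spec h) => [[l2 [L2 [F2 P2]]] _].
apply: wnorm_le; exists (List.app l1 l2); split; first by rewrite List.length_app L1 L2.
split; first by apply/List.Forall_app.
by rewrite gprod_app P1 P2.
Qed.

Lemma wnorm_inv_le g : (wnorm S (ginv g) <= wnorm S g)%N.
Proof.
case: (wnorm_spec g) => [[l [L [F P]]] _].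
apply: wnorm_le; exists (List.rev (List.map ginv l)); split.
  by rewrite List.length_rev List.length_map.
split; last by rewrite gprod_inv P.
apply: List.Forall_rev; apply/List.Forall_map; refine (List.Forall_impl _ _ F); exact: Sbar_inv.
Qed.

Lemma wnorm_inv g : wnorm S (ginv g) = wnorm S g.
Proof. apply/eqP; rewrite eqn_leq wnorm_inv_le /=; have := wnorm_inv_le (ginv g); by rewrite ginvK. Qed.

Lemma wnorm_conj_le g h : (wnorm S (gconj g h) <= wnorm S g)%N.
Proof.
case: (wnorm_spec g) => [[l [L [F P]]] _].
apply: wnorm_le; exists (List.map (fun x => gconj x h) l); split.
  by rewrite List.length_map.
split; last by rewrite gprod_conj P.
apply/List.Forall_map; refine (List.Forall_impl _ _ F) => x; exact: Sbar_conj.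
Qed.

Lemma wnorm_conj g h : wnorm S (gconj g h) = wnorm S g.
Proof.
apply/eqP; rewrite eqn_leq wnorm_conj_le /=.
have := wnorm_conj_le (gconj g h) (ginv h).
have -> : gconj (gconj g h) (ginv h) = g by rewrite /gconj; gsimpl.
done.
Qed.

End W.

From mathcomp Require Import zify.
Import Order.TTheory GRing.Theory Num.Theory.

Section Hom.
Variables (G : Grp) (gT : finGroupType) (phi : G -> gT).
Hypothesis Hh : is_hom phi.

Lemma hom1 : phi gone = 1%g.
Proof.
have E := Hh gone gone; rewrite gmul1 in E.
by rewrite -[phi gone](mulKg (phi gone)) -E mulVg.
Qed.

Lemma homV x : phi (ginv x) = ((phi x)^-1)%g.
Proof.
rewrite -[phi (ginv x)](mulgK (phi x)) -Hh gmulV hom1; by rewrite mul1g.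
Qed.

Lemma homC x h : phi (gconj x h) = ((phi x) ^ (phi h))%g.
Proof. by rewrite /gconj !Hh homV conjgE. Qed.
End Hom.

Definition PP (G : Grp) (N : G -> Prop) := subgroup N /\ Defs.normal N /\ finite_index N.

Lemma PP_T (G : Grp) : PP (fun _ : G => True).
Proof.
split; first by split => //.
split => //; exists [:: gone] => x; exists gone; split => //; by left.
Qed.

Lemma PP_I (G : Grp) (N1 N2 : G -> Prop) : PP N1 -> PP N2 -> PP (fun x => N1 x /\ N2 x).
Proof.
move=> [[a1 [b1 c1]] [n1 [r1 H1]]] [[a2 [b2 c2]] [n2 [r2 H2]]].
split; first split => //.
  split; first by move=> x y [? ?] [? ?]; split; auto.
  by move=> x [? ?]; split; auto.
split; first by move=> x h [? ?]; split; auto.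
pose ch (p : G * G) := epsilon (inhabits gone) (fun x => N1 (ginv p.1 ⊗ x) /\ N2 (ginv p.2 ⊗ x)).
exists (List.map ch (List.list_prod r1 r2)) => x.
case: (H1 x) => s1 [I1 M1]; case: (H2 x) => s2 [I2 M2].
have [E1 E2] : N1 (ginv s1 ⊗ ch (s1, s2)) /\ N2 (ginv s2 ⊗ ch (s1, s2)).
  by apply: (epsilon_spec (inhabits gone) (fun x => N1 (ginv (s1,s2).1 ⊗ x) /\ N2 (ginv (s1,s2).2 ⊗ x))); exists x.
exists (ch (s1, s2)); split; first by apply: List.in_map; apply/List.in_prod.
have K : ginv (ch (s1, s2)) ⊗ x = ginv (ginv s1 ⊗ ch (s1, s2)) ⊗ (ginv s1 ⊗ x) by gsimpl.
have K2 : ginv (ch (s1, s2)) ⊗ x = ginv (ginv s2 ⊗ ch (s1, s2)) ⊗ (ginv s2 ⊗ x) by gsimpl.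
split; [rewrite K; auto | rewrite K2; auto].
Qed.

Lemma list_req (G : Grp) (T : Type) (R : T -> (G -> Prop) -> Prop) (A : list T) :
  (forall a N N', R a N -> (forall x, N' x -> N x) -> R a N') ->
  (forall a, List.In a A -> exists N, PP N /\ R a N) ->
  exists N, PP N /\ forall a, List.In a A -> R a N.
Proof.
move=> Hmono; elim: A => [|a A IH] Hex.
  by exists (fun _ => True); split => //; apply: PP_T.
case: IH => [b Hb|N0 [P0 R0]]; first by apply: Hex; right.
case: (Hex a) => [|Na [Pa Ra]]; first by left.
exists (fun x => N0 x /\ Na x); split; first exact: PP_I.
move=> b [<-|Hb]; first by apply: Hmono Ra _ => x [].
by apply: Hmono (R0 _ Hb) _ => x [].
Qed.

Definition lCdef (G : Grp) (S : list G) (gT : finGroupType) (phi : G -> gT) (u : gT) : nat :=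
  epsilon (inhabits 0%N) (fun n => (exists g, phi g = u /\ wnorm S g = n) /\
                                   forall g, phi g = u -> (n <= wnorm S g)%N).

Lemma lC_spec (G : Grp) (S : list G) (gT : finGroupType) (phi : G -> gT) u :
  (exists g, phi g = u) ->
  (exists g, phi g = u /\ wnorm S g = lCdef S phi u) /\
  forall g, phi g = u -> (lCdef S phi u <= wnorm S g)%N.
Proof.
move=> [g0 H0].
apply: (epsilon_spec (inhabits 0%N) (fun n => (exists g, phi g = u /\ wnorm S g = n) /\
                                   forall g, phi g = u -> (n <= wnorm S g)%N)).
have [n [[g [Hg En]] Hmin]] : exists n, (exists g, phi g = u /\ wnorm S g = n) /\
   forall k, (exists g, phi g = u /\ wnorm S g = k) -> (n <= k)%N.
  by apply: ex_min; exists (wnorm S g0), g0.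
exists n; split; first by exists g.
by move=> g' Hg'; apply: Hmin; exists g'.
Qed.

Theorem proposition3p5 (G : Grp) (S : list G)
    (Hsym : forall s, List.In s S -> List.In (ginv s) S)
    (Hgen : generates (Sbar S)) :
  mfr_finite_inv (wnorm S) <->
  (forall m : nat, profinite_closed (fun g : G => (wnorm S g <= m)%N)).
Proof.
split.
- move=> Hm m x Hx.
  have Q1 : all (fun q : rat => (0 <= q)%R) [:: 0%R; (m%:R)%R] by rewrite /= ler0n.
  have Q2 : (0%R \in [:: 0%R; (m%:R)%R : rat]) by rewrite inE eqxx.
  have [gT [lC [phi [Hn [Hh [Hle Ha]]]]]] := Hm [:: x] _ Q1 Q2.
  pose pre (u : gT) := epsilon (inhabits gone) (fun g => phi g = u).
  have Hpre g : phi (pre (phi g)) = phi g.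
    by apply: (epsilon_spec (inhabits gone) (fun g' => phi g' = phi g)); exists g.
  exists (fun n => phi n = 1%g); split.
    split; first exact: hom1.
    split; first by move=> a b Ea Eb; rewrite Hh Ea Eb mulg1.
    by move=> a Ea; rewrite homV // Ea invg1.
  split; first by move=> a h Ea; rewrite homC // Ea conj1g.
  split.
    exists (List.map pre (enum gT)) => y; exists (pre (phi y)); split.
      by apply: List.in_map; apply: mem_In; rewrite mem_enum.
    by rewrite Hh homV // Hpre mulVg.
  move=> n En Hxn.
  case: Ha => _ [_ Hc].
  have Qm : ((m%:R)%R : rat) \in [:: 0%R; (m%:R)%R] by rewrite !inE eqxx orbT.
  have [_ [Hgt _]] := Hc x _ (or_introl erefl) Qm.
  have Hx' : ((m%:R : rat) < (wnorm S x)%:R)%R by rewrite ltr_nat ltnNge; apply/negP.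
  move/Hgt: Hx'; rewrite ltr_nat => Hlt.
  have := Hle (x ⊗ n); rewrite Hh En mulg1 => Hle2.
  move: Hxn Hlt Hle2; lia.
- move=> Hcl D Q _ _.
  pose R (p : G * G) (N : G -> Prop) := (p.1 <> p.2 -> ~ N (ginv p.1 ⊗ p.2)) /\
     (forall n, N n -> (wnorm S p.1 <= wnorm S (p.1 ⊗ n))%N).
  have [N [PN HR]] : exists N, PP N /\ forall p, List.In p (List.list_prod D D) -> R p N.
    apply: list_req.
      move=> [d d'] N N' [R1 R2] Hs; split; first by move=> /R1 H Hn; apply/H/Hs.
      by move=> n /Hs; apply: R2.
    move=> [d d'] _.
    have [N1 [P1 R1]] : exists N1, PP N1 /\ (d <> d' -> ~ N1 (ginv d ⊗ d')).
      case: (classic (d = d')) => [E|NE].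
        by exists (fun _ => True); split; [apply: PP_T|].
      have Hx : ~ (wnorm S (ginv d' ⊗ d) <= 0)%N.
        rewrite leqn0 => /eqP /(wnorm0 Hsym Hgen) E; apply: NE.
        by rewrite -[d](gmulVK d') E gmul1'.
      have [N1 [a [b [c H1]]]] := Hcl 0 _ Hx.
      exists N1; split; first by split => //; split.
      move=> _ Hn; apply: (H1 _ Hn).
      by rewrite (_ : _ ⊗ _ = gone) ?(wnorm1 Hsym Hgen) //; gsimpl.
    have [N2 [P2 R2]] : exists N2, PP N2 /\ (forall n, N2 n -> (wnorm S d <= wnorm S (d ⊗ n))%N).
      case: (boolP (wnorm S d == 0)) => [/eqP E|NE].
        by exists (fun _ => True); split; [apply: PP_T| move=> n _; rewrite E].
      have Hx : ~ (wnorm S d <= (wnorm S d).-1)%N by move: NE; lia.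
      have [N2 [a [b [c H2]]]] := Hcl _ _ Hx.
      exists N2; split; first by split => //; split.
      move=> n /H2; move: NE; lia.
    exists (fun x => N1 x /\ N2 x); split; first exact: PP_I.
    by split => /=; [move=> /R1 H [] | move=> n [] _ /R2].
  case: PN => HNs [HNn HNf].
  have [gT [phi [Hh [Hs Hk]]]] := quotient_exists HNs HNn HNf.
  pose lC := lCdef S phi.
  have Sp := fun u => lC_spec S (Hs u).
  have Lle u g : phi g = u -> (lC u <= wnorm S g)%N by move=> E; apply: (proj2 (Sp u)).
  have Lw u : exists g, phi g = u /\ wnorm S g = lC u by apply: (proj1 (Sp u)).
  have Linv u : (lC (u^-1)%g <= lC u)%N.
    case: (Lw u) => g [<- <-]; rewrite -(homV Hh) -(wnorm_inv Hsym Hgen); exact: Lle.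
  have Lconj u v : (lC (u ^ v)%g <= lC u)%N.
    case: (Lw u) => g [<- <-]; case: (Hs v) => h <-.
    apply: leq_trans _ (wnorm_conj_le Hsym Hgen g h); rewrite -(homC Hh); exact: Lle.
  exists gT, lC, phi; split.
    split.
      apply/eqP; rewrite -leqn0 -(wnorm1 Hsym Hgen); apply: Lle; exact: hom1.
    split; first by move=> u; apply/eqP; rewrite eqn_leq Linv /=; have := Linv u^-1%g; rewrite invgK.
    split.
      move=> u v; case: (Lw u) => g [<- <-]; case: (Lw v) => h [<- <-].
      apply: leq_trans (wnorm_mul Hsym Hgen g h); apply: Lle; exact: Hh.
    split.
      move=> u E; case: (Lw u) => g [Eg]; rewrite E => /(wnorm0 Hsym Hgen) Hg; by rewrite -Eg Hg (hom1 Hh).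
    move=> u v; apply/eqP; rewrite eqn_leq Lconj /=.
    by have := Lconj (u ^ v)%g (v^-1)%g; rewrite conjgK.
  split; first exact: Hh.
  split; first by move=> g; apply: Lle.
  have Hin d : List.In d D -> List.In (d, d) (List.list_prod D D) by move=> Hd; apply/List.in_prod.
  split.
    move=> x y Hx Hy E; case: (classic (x = y)) => // NE.
    have := (proj1 (HR (x, y) (List.in_prod _ _ _ _ Hx Hy))) NE; by move/Hk: E.
  split; first by move=> h g _ _ _; apply: Hh.
  move=> g q Hg _.
  have E : lC (phi g) = wnorm S g.
    apply/eqP; rewrite eqn_leq Lle //=.
    case: (Lw (phi g)) => g' [E' <-].
    have := (proj2 (HR (g, g) (Hin _ Hg))) (ginv g ⊗ g') (proj1 (Hk _ _) (esym E')).
    by rewrite gmulVK.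
  by rewrite E.
Qed.
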